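(* Let $N\in\mathbb{N}$ with $N>1$ and $0\le\mu<L<\infty$, and let $(\tau,\{\beta_{i,j}\},\{\lambda_{i,j}\})$ be an optimal solution of problem (Minimax-R) described in the context. Then: (i) for $0\le i<N-1$, if $\lambda_{i,i+1}=0$ then $\beta_{i,j}=0$ for all $j$; (ii) if $\lambda_{N-1,\star}=0$ then $\beta_{N-1,j}=0$ for all $j$; (iii) defining $\alpha_{i,j}=0$ if $\beta_{i,j}=0$, and otherwise $\alpha_{i,j}=\beta_{i,j}/\lambda_{i,i+1}$ for $1\le i<N-1$, $\alpha_{N-1,j}=\beta_{N-1,j}/\lambda_{N-1,\star}$, $\alpha_{N,j}=\beta_{N,j}$, the method generating iterates by $w_k-w_\star=(w_0-w_\star)(1-\frac{\mu}{L}\sum_{i=0}^{k-1}\alpha_{k,i})-\sum_{i=0}^{k-1}\frac{\alpha_{k,i}}{L}\nabla\tilde f(w_i)$, $k=1,\dots,N$, with $\tilde f(x)=f(x)-\frac\mu2\|x-w_\star\|^2$, satisfies $\|w_N-w_\star\|^2\le\tau\|w_0-w_\star\|^2$ for any $d\in\mathbb{N}$, $w_0\in\mathbb{R}^d$, $f\in\mathcal{F}_{\mu,L}(\mathbb{R}^d)$ and $w_\star\in\arg\min f$.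
   Context: $\mathcal{F}_{\mu,L}(\mathbb{R}^d)$ denotes the set of proper closed convex functions $f:\mathbb{R}^d\to\mathbb{R}$ such that for all $x,y$: $f(x)\le f(y)+\langle\nabla f(y);x-y\rangle+\frac L2\|x-y\|^2$ and $f(x)\ge f(y)+\langle\nabla f(y);x-y\rangle+\frac\mu2\|x-y\|^2$. Let $\mathbf{w}_0=e_1\in\mathbb{R}^{N+1}$, $\mathbf{g}_i=e_{i+2}\in\mathbb{R}^{N+1}$, $\mathbf{f}_i=e_{i+1}\in\mathbb{R}^N$ ($i=0,\dots,N-1$). Problem (Minimax-R): variables $\tau\in\mathbb{R}$; $\lambda_{i,i+1}\ge0$ ($i=0,\dots,N-2$), $\lambda_{\star,i}\ge0$ ($i=0,\dots,N-1$), $\lambda_{N-1,\star}\ge0$; $\beta_{i,j}\in\mathbb{R}$ ($1\le i\le N$, $0\le j\le i-1$). Minimize $\tau$ subject to $\begin{pmatrix}S''&\mathbf{w}_N\\\mathbf{w}_N^\top&1\end{pmatrix}\succeq0$ and $\sum_{i=0}^{N-2}\lambda_{i,i+1}(\mathbf{f}_{i+1}-\mathbf{f}_i)+\sum_{i=0}^{N-1}\lambda_{\star,i}\mathbf{f}_i-\lambda_{N-1,\star}\mathbf{f}_{N-1}=0$, where $\mathbf{w}_N=\mathbf{w}_0(1-\frac{\mu}{L}\sum_{i=0}^{N-1}\beta_{N,i})-\sum_{i=0}^{N-1}\frac{\beta_{N,i}}{L}\mathbf{g}_i$ and, writing $\mathrm{sym}(a,b)=\frac12(ab^\top+ba^\top)$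 and empty sums as $0$, $S''=\frac{1}{2(L-\mu)}\big(\lambda_{N-1,\star}\mathbf{g}_{N-1}\mathbf{g}_{N-1}^\top+\sum_{i=0}^{N-1}\lambda_{\star,i}\mathbf{g}_i\mathbf{g}_i^\top+\sum_{i=0}^{N-2}\lambda_{i,i+1}(\mathbf{g}_i-\mathbf{g}_{i+1})(\mathbf{g}_i-\mathbf{g}_{i+1})^\top\big)-\lambda_{\star,0}\mathrm{sym}(\mathbf{g}_0,\mathbf{w}_0)-\sum_{i=1}^{N-2}\big(\lambda_{i,i+1}-\frac{\mu}{L}\sum_{j=0}^{i-1}\beta_{i,j}\big)\mathrm{sym}(\mathbf{g}_i,\mathbf{w}_0)+\sum_{i=1}^{N-2}\sum_{j=0}^{i-1}\frac{\beta_{i,j}}{L}\mathrm{sym}(\mathbf{g}_i,\mathbf{g}_j)-\big(\lambda_{N-1,\star}-\frac{\mu}{L}\sum_{j=0}^{N-2}\beta_{N-1,j}\big)\mathrm{sym}(\mathbf{g}_{N-1},\mathbf{w}_0)+\sum_{j=0}^{N-2}\frac{\beta_{N-1,j}}{L}\mathrm{sym}(\mathbf{g}_{N-1},\mathbf{g}_j)+\sum_{i=0}^{N-2}\big(\lambda_{i,i+1}-\frac{\mu}{L}\sum_{j=0}^{i-1}\beta_{i,j}\big)\mathrm{sym}(\mathbf{g}_{i+1},\mathbf{w}_0)-\sum_{i=0}^{N-2}\sum_{j=0}^{i-1}\frac{\beta_{i,j}}{L}\mathrm{sym}(\mathbf{g}_{i+1},\mathbf{g}_j)+\tau\mathbf{w}_0\mathbf{w}_0^\top$.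 *)

(* Defs.v *)
From HB Require Import structures.
From mathcomp Require Import all_boot all_order all_algebra all_classical all_reals all_analysis.
Set Implicit Arguments. Unset Strict Implicit. Unset Printing Implicit Defensive.
Import Order.TTheory GRing.Theory Num.Theory numFieldTopology.Exports numFieldNormedType.Exports.
Local Open Scope ring_scope.

Section Defs.
Variable R : realType.

(** Standard basis column vector e_{k+1} (0-based index k) of R^n. *)
Definition evec (n k : nat) : 'cV[R]_n := \col_(r < n) ((r : nat) == k)%:R.

Definition symm (n : nat) (a b : 'cV[R]_n) : 'M[R]_n :=
  2^-1 *: (a *m b^T + b *m a^T).

Definition psd (n : nat) (A : 'M[R]_n) : Prop :=
  A^T = A /\ forall x : 'cV[R]_n, 0 <= (x^T *m A *m x) 0 0.

(** Data of (Minimax-R):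
    lnext i = lambda_{i,i+1} (0 <= i <= N-2), lstar i = lambda_{*,i} (0 <= i <= N-1),
    llast = lambda_{N-1,*}, beta i j = beta_{i,j} (1 <= i <= N, 0 <= j <= i-1).
    Values of lnext, lstar, beta outside these index ranges are irrelevant. *)
Section Minimax.
Variables (N : nat) (mu L tau : R) (lnext lstar : nat -> R) (llast : R)
          (beta : nat -> nat -> R).

Definition w0v : 'cV[R]_N.+1 := evec N.+1 0.
Definition gv (i : nat) : 'cV[R]_N.+1 := evec N.+1 i.+1.
Definition fv (i : nat) : 'cV[R]_N := evec N i.

Definition wNv : 'cV[R]_N.+1 :=
  (1 - mu / L * \sum_(i < N) beta N i) *: w0v
  - \sum_(i < N) (beta N i / L) *: gv i.

Definition Spp : 'M[R]_N.+1 :=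
  (2 * (L - mu))^-1 *:
    (llast *: (gv N.-1 *m (gv N.-1)^T)
     + \sum_(i < N) lstar i *: (gv i *m (gv i)^T)
     + \sum_(i < N.-1) lnext i *: ((gv i - gv i.+1) *m (gv i - gv i.+1)^T))
  - lstar 0 *: symm (gv 0) w0v
  - \sum_(1 <= i < N.-1) (lnext i - mu / L * \sum_(j < i) beta i j) *: symm (gv i) w0v
  + \sum_(1 <= i < N.-1) \sum_(j < i) (beta i j / L) *: symm (gv i) (gv j)
  - (llast - mu / L * \sum_(j < N.-1) beta N.-1 j) *: symm (gv N.-1) w0v
  + \sum_(j < N.-1) (beta N.-1 j / L) *: symm (gv N.-1) (gv j)
  + \sum_(i < N.-1) (lnext i - mu / L * \sum_(j < i) beta i j) *: symm (gv i.+1) w0v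
  - \sum_(i < N.-1) \sum_(j < i) (beta i j / L) *: symm (gv i.+1) (gv j)
  + tau *: (w0v *m w0v^T).

Definition LMI : 'M[R]_(N.+1 + 1) :=
  block_mx Spp wNv wNv^T (1%:M : 'M[R]_1).

Definition lin_constraint : 'cV[R]_N :=
  \sum_(i < N.-1) lnext i *: (fv i.+1 - fv i)
  + \sum_(i < N) lstar i *: fv i
  - llast *: fv N.-1.

Definition feasible : Prop :=
  (forall i : nat, (i.+2 <= N)%N -> 0 <= lnext i) /\
  (forall i : nat, (i < N)%N -> 0 <= lstar i) /\
  0 <= llast /\
  psd LMI /\
  lin_constraint = 0.

Definition alpha (k j : nat) : R :=
  if beta k j == 0 then 0
  else if k == N then beta k j
  else if k == N.-1 then beta k j / llast
  else beta k j / lnext k.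

End Minimax.

Definition optimal (N : nat) (mu L tau : R) (lnext lstar : nat -> R) (llast : R)
    (beta : nat -> nat -> R) : Prop :=
  feasible N mu L tau lnext lstar llast beta /\
  forall (tau' : R) (lnext' lstar' : nat -> R) (llast' : R) (beta' : nat -> nat -> R),
    feasible N mu L tau' lnext' lstar' llast' beta' -> tau <= tau'.

Definition dotv (d : nat) (a b : 'cV[R]_d) : R := (a^T *m b) 0 0.
Definition sqnorm (d : nat) (a : 'cV[R]_d) : R := dotv a a.

Definition is_gradient (d : nat) (f : 'cV[R]_d -> R) (grad : 'cV[R]_d -> 'cV[R]_d) : Prop :=
  forall x : 'cV[R]_d,
    differentiable (f : 'cV[R]_d -> R^o) x /\
    ('d (f : 'cV[R]_d -> R^o) x : 'cV[R]_d -> R^o) = (fun h => dotv (grad x) h).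

Definition in_FmuL (mu L : R) (d : nat) (f : 'cV[R]_d -> R) (grad : 'cV[R]_d -> 'cV[R]_d) : Prop :=
  is_gradient f grad /\
  (forall (x y : 'cV[R]_d) (t : R), 0 <= t <= 1 ->
      f (t *: x + (1 - t) *: y) <= t * f x + (1 - t) * f y) /\
  (forall x y : 'cV[R]_d,
      f x <= f y + dotv (grad y) (x - y) + L / 2 * sqnorm (x - y)) /\
  (forall x y : 'cV[R]_d,
      f x >= f y + dotv (grad y) (x - y) + mu / 2 * sqnorm (x - y)).

Definition is_argmin (d : nat) (f : 'cV[R]_d -> R) (ws : 'cV[R]_d) : Prop :=
  forall x : 'cV[R]_d, f ws <= f x.

End Defs.

(* Main.v *)
Require Import Defs.
From HB Require Import structures.
From mathcomp Require Import all_boot all_order all_algebra all_classical all_reals all_analysis.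
From mathcomp Require Import ring lra zify.
Import Order.TTheory GRing.Theory Num.Theory.
Set Implicit Arguments. Unset Strict Implicit.
Local Open Scope ring_scope.

Section Dot.
Variable R : realType.
Variable d : nat.
Implicit Types a b c : 'cV[R]_d.

Lemma dotvE a b : dotv a b = \sum_k a k 0 * b k 0.
Proof. by rewrite /dotv !mxE; apply: eq_bigr => k _; rewrite mxE. Qed.

Lemma dotvC a b : dotv a b = dotv b a.
Proof. by rewrite !dotvE; apply: eq_bigr => k _; rewrite mulrC. Qed.

Lemma dotvDl a b c : dotv (a + b) c = dotv a c + dotv b c.
Proof. by rewrite !dotvE -big_split; apply: eq_bigr => k _; rewrite mxE mulrDl. Qed.

Lemma dotvDr a b c : dotv c (a + b) = dotv c a + dotv c b.
Proof. by rewrite dotvC dotvDl !(dotvC c). Qed.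

Lemma dotvZl (x : R) a b : dotv (x *: a) b = x * dotv a b.
Proof. by rewrite !dotvE mulr_sumr; apply: eq_bigr => k _; rewrite mxE mulrA. Qed.

Lemma dotvZr (x : R) a b : dotv b (x *: a) = x * dotv b a.
Proof. by rewrite dotvC dotvZl dotvC. Qed.

Lemma dotvNl a b : dotv (- a) b = - dotv a b.
Proof. by rewrite -scaleN1r dotvZl mulN1r. Qed.

Lemma dotvNr a b : dotv b (- a) = - dotv b a.
Proof. by rewrite dotvC dotvNl dotvC. Qed.

Lemma dotvBl a b c : dotv (a - b) c = dotv a c - dotv b c.
Proof. by rewrite dotvDl dotvNl. Qed.

Lemma dotvBr a b c : dotv c (a - b) = dotv c a - dotv c b.
Proof. by rewrite dotvDr dotvNr. Qed.

Lemma dotv0l a : dotv 0 a = 0.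
Proof. by rewrite -(scale0r 0) dotvZl mul0r. Qed.

Lemma dotv0r a : dotv a 0 = 0.
Proof. by rewrite dotvC dotv0l. Qed.

Lemma dotv_suml (I : Type) (r : seq I) (P : pred I) (F : I -> 'cV[R]_d) b :
  dotv (\sum_(i <- r | P i) F i) b = \sum_(i <- r | P i) dotv (F i) b.
Proof.
elim/big_rec2: _ => [|i y1 y2 _ <-]; first by rewrite dotv0l.
by rewrite dotvDl.
Qed.

Lemma dotv_sumr (I : Type) (r : seq I) (P : pred I) (F : I -> 'cV[R]_d) b :
  dotv b (\sum_(i <- r | P i) F i) = \sum_(i <- r | P i) dotv b (F i).
Proof. by rewrite dotvC dotv_suml; apply: eq_bigr => i _; rewrite dotvC. Qed.

Lemma sqnorm_ge0 a : 0 <= sqnorm a.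
Proof. by rewrite /sqnorm dotvE; apply: sumr_ge0 => k _; rewrite -expr2 sqr_ge0. Qed.

Lemma cocoer (F : 'cV[R]_d -> R) (G : 'cV[R]_d -> 'cV[R]_d) (L' : R) :
  0 < L' ->
  (forall x y, F x <= F y + dotv (G y) (x - y) + L' / 2 * sqnorm (x - y)) ->
  (forall x y, F y + dotv (G y) (x - y) <= F x) ->
  forall x y, F y + dotv (G y) (x - y) + sqnorm (G x - G y) / (2 * L') <= F x.
Proof.
move=> L0 Hup Hlo x y.
set u := G x - G y.
set z := x - L'^-1 *: u.
have H1 := Hup z x. have H2 := Hlo z y.
have E1 : z - x = - (L'^-1 *: u) by rewrite /z addrAC subrr add0r.
have E2 : z - y = (x - y) - L'^-1 *: u by rewrite /z addrAC.
have Eu : sqnorm u = dotv (G x) u - dotv (G y) u by rewrite /sqnorm /u dotvBl.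
clearbody u z.
rewrite E1 /sqnorm dotvNl dotvNr !dotvZl !dotvZr dotvNr dotvZr -/(sqnorm u) !mulrN opprK in H1.
rewrite E2 dotvBr dotvZr in H2.
move: H1 H2 Eu.
set A := dotv (G x) u; set B := dotv (G y) u; set D := dotv (G y) (x - y); set S := sqnorm u.
have EL : L' / 2 * (L'^-1 * (L'^-1 * S)) = S / (2 * L').
  by field; rewrite gt_eqF.
have EL2 : S / (2 * L') = L'^-1 * S / 2.
  by field; rewrite gt_eqF.
rewrite EL => H1 H2 Eu.
have : L'^-1 * A - L'^-1 * B = L'^-1 * S by rewrite Eu mulrBr.
move: EL2; lra.
Qed.

End Dot.

Section Mat.
Variable R : realType.

Lemma delta_sum (n k : nat) (F : nat -> R) :
  \sum_(a < n) F a * ((a : nat) == k)%:R = if (k < n)%N then F k else 0.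
Proof.
elim: n => [|n IH]; first by rewrite big_ord0.
rewrite big_ord_recr /= IH.
case: (ltngtP k n) => [kn|nk|->]; rewrite ?eqxx ?mulr1.
- by rewrite (ltn_trans kn (ltnSn n)) mulr0 addr0.
- by rewrite ltnNge nk mulr0 addr0.
- by rewrite ltnSn add0r.
Qed.

Variable N : nat.
Variable d : nat.
Variable V : nat -> 'cV[R]_d.

Definition Pm : 'M[R]_(d, N.+1) := \matrix_(r, a) V a r 0.
Definition TT (M : 'M[R]_N.+1) : R := \tr (Pm *m M *m Pm^T).

Lemma Phi_evec k : (forall k, (N < k)%N -> V k = 0) -> Pm *m evec R N.+1 k = V k.
Proof.
move=> HV; apply/matrixP => r c; rewrite (ord1 c) !mxE.
under eq_bigr do rewrite !mxE.
rewrite (delta_sum _ _ (fun a => V a r 0)).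
case: ifP => // /negbT; rewrite -leqNgt => Hk.
by rewrite HV ?mxE.
Qed.

Lemma TT_D A B : TT (A + B) = TT A + TT B.
Proof. by rewrite /TT mulmxDr mulmxDl mxtraceD. Qed.
Lemma TT_N A : TT (- A) = - TT A.
Proof. by rewrite /TT mulmxN mulNmx; apply: raddfN. Qed.
Lemma TT_B A B : TT (A - B) = TT A - TT B.
Proof. by rewrite TT_D TT_N. Qed.
Lemma TT_Z (a : R) A : TT (a *: A) = a * TT A.
Proof. by rewrite /TT -scalemxAr -scalemxAl mxtraceZ. Qed.
Lemma TT_sum (I : Type) (r : seq I) (P : pred I) (F : I -> 'M[R]_N.+1) :
  TT (\sum_(i <- r | P i) F i) = \sum_(i <- r | P i) TT (F i).
Proof.
elim/big_rec2: _ => [|i y1 y2 _ <-]; last by rewrite TT_D.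
by rewrite /TT mulmx0 mul0mx mxtrace0.
Qed.
Lemma TT_sumZ (I : Type) (r : seq I) (P : pred I) (a : I -> R) (F : I -> 'M[R]_N.+1) :
  TT (\sum_(i <- r | P i) a i *: F i) = \sum_(i <- r | P i) a i * TT (F i).
Proof. by rewrite TT_sum; apply: eq_bigr => i _; rewrite TT_Z. Qed.

Lemma tr_outer (u v : 'cV[R]_d) : \tr (u *m v^T) = dotv u v.
Proof.
rewrite /mxtrace dotvE; apply: eq_bigr => r _.
by rewrite !mxE big_ord1 !mxE.
Qed.

Lemma TT_outer (a b : 'cV[R]_N.+1) : TT (a *m b^T) = dotv (Pm *m a) (Pm *m b).
Proof. by rewrite /TT !mulmxA -mulmxA -trmx_mul tr_outer. Qed.

Lemma TT_symm (a b : 'cV[R]_N.+1) : TT (symm a b) = dotv (Pm *m a) (Pm *m b).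
Proof.
rewrite /symm TT_Z TT_D !TT_outer (dotvC (Pm *m b)).
by set x := dotv _ _; field.
Qed.

Lemma TT_psd (M : 'M[R]_N.+1) :
  (forall y : 'cV[R]_N.+1, 0 <= (y^T *m M *m y) 0 0) -> 0 <= TT M.
Proof.
move=> H; rewrite /TT /mxtrace; apply: sumr_ge0 => r _.
have -> : (Pm *m M *m Pm^T) r r = ((row r Pm)^T^T *m M *m (row r Pm)^T) 0 0.
  rewrite trmxK !mxE; apply: eq_bigr => b _; rewrite !mxE; congr (_ * _).
  by apply: eq_bigr => a _; rewrite !mxE.
exact: H.
Qed.

End Mat.

Section Form.
Variable R : realType.
Variables (N : nat) (mu L tau : R) (lnext lstar : nat -> R) (llast : R)
          (beta : nat -> nat -> R).
Variable d : nat.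
Variable V : nat -> 'cV[R]_d.
Hypothesis HV : forall k, (N < k)%N -> V k = 0.

Local Notation g i := (V i.+1).
Local Notation x0 := (V 0).
Local Notation P := (Pm N V).

Definition Fml : R :=
  (2 * (L - mu))^-1 *
    (llast * dotv (g N.-1) (g N.-1)
     + \sum_(i < N) lstar i * dotv (g i) (g i)
     + \sum_(i < N.-1) lnext i * dotv (g i - g i.+1) (g i - g i.+1))
  - lstar 0 * dotv (g 0) x0
  - \sum_(1 <= i < N.-1) (lnext i - mu / L * \sum_(j < i) beta i j) * dotv (g i) x0
  + \sum_(1 <= i < N.-1) \sum_(j < i) (beta i j / L) * dotv (g i) (g j)
  - (llast - mu / L * \sum_(j < N.-1) beta N.-1 j) * dotv (g N.-1) x0
  + \sum_(j < N.-1) (beta N.-1 j / L) * dotv (g N.-1) (g j)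
  + \sum_(i < N.-1) (lnext i - mu / L * \sum_(j < i) beta i j) * dotv (g i.+1) x0
  - \sum_(i < N.-1) \sum_(j < i) (beta i j / L) * dotv (g i.+1) (g j)
  + tau * dotv x0 x0.

Lemma half_double (a : R) : 2^-1 * (a + a) = a.
Proof. by field. Qed.

Lemma Phi_gv i : P *m gv R N i = g i.
Proof. exact: Phi_evec. Qed.
Lemma Phi_w0 : P *m w0v R N = x0.
Proof. exact: Phi_evec. Qed.

Lemma TT_Spp : TT V (Spp N mu L tau lnext lstar llast beta) = Fml.
Proof.
have E1 : TT V (\sum_(i < N) lstar i *: (gv R N i *m (gv R N i)^T))
          = \sum_(i < N) lstar i * dotv (g i) (g i).
  by rewrite TT_sumZ; apply: eq_bigr => i _; rewrite TT_outer !Phi_gv.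
have E2 : TT V (\sum_(i < N.-1) lnext i *: ((gv R N i - gv R N i.+1) *m (gv R N i - gv R N i.+1)^T))
          = \sum_(i < N.-1) lnext i * dotv (g i - g i.+1) (g i - g i.+1).
  by rewrite TT_sumZ; apply: eq_bigr => i _; rewrite TT_outer !mulmxBr !Phi_gv.
have E3 : TT V (\sum_(1 <= i < N.-1) (lnext i - mu / L * \sum_(j < i) beta i j) *: symm (gv R N i) (w0v R N))
          = \sum_(1 <= i < N.-1) (lnext i - mu / L * \sum_(j < i) beta i j) * dotv (g i) x0.
  by rewrite TT_sumZ; apply: eq_bigr => i _; rewrite TT_symm Phi_gv Phi_w0.
have E4 : TT V (\sum_(1 <= i < N.-1) \sum_(j < i) (beta i j / L) *: symm (gv R N i) (gv R N j))
          = \sum_(1 <= i < N.-1) \sum_(j < i) (beta i j / L) * dotv (g i) (g j).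
  rewrite TT_sum; apply: eq_bigr => i _.
  by rewrite TT_sumZ; apply: eq_bigr => j _; rewrite TT_symm !Phi_gv.
have E5 : TT V (\sum_(j < N.-1) (beta N.-1 j / L) *: symm (gv R N N.-1) (gv R N j))
          = \sum_(j < N.-1) (beta N.-1 j / L) * dotv (g N.-1) (g j).
  by rewrite TT_sumZ; apply: eq_bigr => j _; rewrite TT_symm !Phi_gv.
have E6 : TT V (\sum_(i < N.-1) (lnext i - mu / L * \sum_(j < i) beta i j) *: symm (gv R N i.+1) (w0v R N))
          = \sum_(i < N.-1) (lnext i - mu / L * \sum_(j < i) beta i j) * dotv (g i.+1) x0.
  by rewrite TT_sumZ; apply: eq_bigr => i _; rewrite TT_symm Phi_gv Phi_w0.
have E7 : TT V (\sum_(i < N.-1) \sum_(j < i) (beta i j / L) *: symm (gv R N i.+1) (gv R N j))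
          = \sum_(i < N.-1) \sum_(j < i) (beta i j / L) * dotv (g i.+1) (g j).
  rewrite TT_sum; apply: eq_bigr => i _.
  by rewrite TT_sumZ; apply: eq_bigr => j _; rewrite TT_symm !Phi_gv.
rewrite /Spp !(TT_D, TT_N, TT_Z) E1 E2 E3 E4 E5 E6 E7.
rewrite !TT_outer !Phi_gv !Phi_w0 (dotvC x0 (g 0)) (dotvC x0 (g N.-1)) !half_double.
by [].
Qed.

Lemma LMI_schur (y : 'cV[R]_N.+1) :
  psd (LMI N mu L tau lnext lstar llast beta) ->
  0 <= (y^T *m (Spp N mu L tau lnext lstar llast beta
          - wNv N mu L beta *m (wNv N mu L beta)^T) *m y) 0 0.
Proof.
case=> _ H.
set S := Spp _ _ _ _ _ _ _ _; set w := wNv _ _ _ _.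
have := H (col_mx y (- (w^T *m y))).
rewrite /LMI -/S -/w tr_col_mx mul_row_block mul_row_col.
rewrite raddfN /= trmx_mul trmxK mulmx1 addrN mul0mx addr0.
suff -> : y^T *m (S - w *m w^T) *m y = (y^T *m S + - (y^T *m w) *m w^T) *m y by [].
by rewrite mulmxBr mulNmx mulmxA.
Qed.

Lemma Fml_ge : psd (LMI N mu L tau lnext lstar llast beta) ->
  sqnorm (P *m wNv N mu L beta) <= Fml.
Proof.
move=> H; have := TT_psd V (fun y => LMI_schur y H).
by rewrite TT_B TT_outer TT_Spp subr_ge0.
Qed.

Lemma Phi_wN : P *m wNv N mu L beta =
  (1 - mu / L * \sum_(i < N) beta N i) *: x0 - \sum_(i < N) (beta N i / L) *: g i.
Proof.
rewrite /wNv mulmxBr mulmx_sumr -scalemxAr Phi_w0; congr (_ - _).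
by apply: eq_bigr => i _; rewrite -scalemxAr Phi_gv.
Qed.

End Form.

Section Lam.
Variable R : realType.
Variables (N : nat) (mu L tau : R) (lnext lstar : nat -> R) (llast : R)
          (beta : nat -> nat -> R).

Lemma delta_sumS (n m : nat) (F : nat -> R) :
  \sum_(a < n) F a * (m == (a : nat).+1)%:R =
  if m is m'.+1 then (if (m' < n)%N then F m' else 0) else 0.
Proof.
case: m => [|m'].
  by rewrite big1 // => a _; rewrite mulr0.
rewrite -(delta_sum n m' F); apply: eq_bigr => a _.
by rewrite eqSS eq_sym.
Qed.

Lemma lc_coord m (hm : (m < N)%N) :
  lin_constraint N lnext lstar llast (Ordinal hm) 0 =
  (if m is m'.+1 then (if (m' < N.-1)%N then lnext m' else 0) else 0)
  - (if (m < N.-1)%N then lnext m else 0) + lstar m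
  - (if m == N.-1 then llast else 0).
Proof.
rewrite /lin_constraint !mxE !summxE.
under eq_bigr do rewrite !mxE.
under [X in _ + X - _]eq_bigr do rewrite !mxE.
rewrite /=.
have E1 : \sum_(i < N.-1) lnext i * (m == i)%:R = if (m < N.-1)%N then lnext m else 0.
  by rewrite -delta_sum; apply: eq_bigr => i _; rewrite eq_sym.
have E2 : \sum_(i < N) lstar i * (m == i)%:R = lstar m.
  have -> : lstar m = if (m < N)%N then lstar m else 0 by rewrite hm.
  by rewrite -delta_sum; apply: eq_bigr => i _; rewrite eq_sym.
under eq_bigr do rewrite mulrBr.
rewrite sumrB delta_sumS E1 E2.
by case: (m == N.-1); rewrite ?mulr1 ?mulr0.
Qed.


Section LamH.
Hypothesis HN : (1 < N)%N.
Hypothesis Hlc : lin_constraint N lnext lstar llast = 0.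

Lemma lc_mid m : (m.+1 < N)%N ->
  lnext m = (if m is m'.+1 then lnext m' else 0) + lstar m.
Proof.
move=> hm; have hm' : (m < N)%N by lia.
have := lc_coord hm'; rewrite Hlc mxE.
have -> : (m < N.-1)%N by lia.
have -> : (m == N.-1) = false by apply/eqP; lia.
case: m hm hm' => [|m'] hm hm'.
  by move=> H; apply/eqP; rewrite -subr_eq0; apply/eqP; move: H; lra.
have -> : (m' < N.-1)%N by lia.
by move=> H; apply/eqP; rewrite -subr_eq0; apply/eqP; move: H; lra.
Qed.

Lemma lc_last : llast = lnext N.-2 + lstar N.-1.
Proof.
have hm : (N.-1 < N)%N by lia.
have := lc_coord hm; rewrite Hlc mxE eqxx ltnn.
have -> : N.-1 = N.-2.+1 by lia.
have -> : (N.-2 < N.-2.+1)%N by lia.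
by move=> H; apply/eqP; rewrite -subr_eq0; apply/eqP; move: H; lra.
Qed.

End LamH.
End Lam.

Section Test.
Variable R : realType.
Variables (N : nat) (mu L tau : R) (lnext lstar : nat -> R) (llast : R)
          (beta : nat -> nat -> R).

Lemma sum_nat_single (m n k : nat) (F : nat -> R) :
  (m <= k < n)%N -> (forall i, (m <= i < n)%N -> i != k -> F i = 0) ->
  \sum_(m <= i < n) F i = F k.
Proof.
move=> /andP[mk kn] H.
rewrite (big_cat_nat mk (ltnW kn)) (big_ltn kn) /=.
have H1 : \sum_(m <= i < k) F i = 0.
  rewrite big1_seq // => i /andP[_]; rewrite mem_iota => /andP[a b].
  by apply: H; [lia | apply/eqP; lia].
have H2 : \sum_(k.+1 <= i < n) F i = 0.
  rewrite big1_seq // => i /andP[_]; rewrite mem_iota => /andP[a b].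
  by apply: H; [lia | apply/eqP; lia].
by rewrite H1 H2 add0r addr0.
Qed.

Lemma dot1 (a b : R) : dotv (const_mx a : 'cV[R]_1) (const_mx b) = a * b.
Proof. by rewrite dotvE big_ord1 !mxE. Qed.

Variable k : nat.
Hypothesis HL : 0 < L.
Hypothesis Hk1 : (1 <= k)%N.
Hypothesis HkN : (k <= N.-1)%N.
Hypothesis IH : forall m, (m < k)%N -> forall j, (j < m)%N -> beta m j = 0.
Hypothesis Hst : forall m, (m <= k)%N -> (m < N)%N -> lstar m = 0.
Hypothesis Hnx : forall m, (m <= k)%N -> (m < N.-1)%N -> lnext m = 0.
Hypothesis Hll : k = N.-1 -> llast = 0.

Definition vt (t : R) (a : nat) : R :=
  if a is a'.+1 then (if a' == k then 1 else if (a' < k)%N then t * beta k a' else 0) else 0.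
Definition Vt t a : 'cV[R]_1 := const_mx (vt t a).

Lemma vt_big t a : (k.+1 < a)%N -> vt t a = 0.
Proof.
case: a => [//|a] h /=.
have -> : (a == k) = false by apply/eqP; lia.
by have -> : (a < k)%N = false by lia.
Qed.

Lemma vtk t : vt t k.+1 = 1.
Proof. by rewrite /= eqxx. Qed.

Lemma vtj t (j : nat) : (j < k)%N -> vt t j.+1 = t * beta k j.
Proof. by move=> jk /=; rewrite jk; have -> : (j == k) = false by apply/eqP; lia. Qed.

Lemma Fk t : \sum_(j < k) beta k j / L * dotv (Vt t k.+1) (Vt t j.+1)
   = t / L * \sum_(j < k) beta k j ^+ 2.
Proof.
rewrite mulr_sumr; apply: eq_bigr => j _.
rewrite dot1 vtk vtj //; ring.
Qed.


Lemma Vt0 t : Vt t 0 = 0.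
Proof. by apply/matrixP => i j; rewrite !mxE. Qed.

Lemma Fml_test t : Fml N mu L tau lnext lstar llast beta (Vt t)
  = t / L * \sum_(j < k) beta k j ^+ 2.
Proof.
have Q1 : llast * dotv (Vt t N.-1.+1) (Vt t N.-1.+1) = 0.
  rewrite dot1; case: (eqVneq k N.-1) => [e|ne]; first by rewrite Hll // mul0r.
  by rewrite vt_big ?mul0r ?mulr0 //; lia.
have Q2 : \sum_(i < N) lstar i * dotv (Vt t i.+1) (Vt t i.+1) = 0.
  apply: big1 => i _; rewrite dot1; case: (leqP i k) => h.
    by rewrite Hst // mul0r.
  by rewrite vt_big ?mul0r ?mulr0 //; lia.
have Q3 : \sum_(i < N.-1) lnext i * dotv (Vt t i.+1 - Vt t i.+2) (Vt t i.+1 - Vt t i.+2) = 0.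
  apply: big1 => i _; case: (leqP i k) => h.
    by rewrite Hnx // mul0r.
  by rewrite /Vt !vt_big; [rewrite subrr dotv0l mulr0 | lia | lia].
have T2 : \sum_(1 <= i < N.-1) (lnext i - mu / L * \sum_(j < i) beta i j) * dotv (Vt t i.+1) (Vt t 0) = 0.
  by apply: big1 => i _; rewrite Vt0 dotv0r mulr0.
have T6 : \sum_(i < N.-1) (lnext i - mu / L * \sum_(j < i) beta i j) * dotv (Vt t i.+2) (Vt t 0) = 0.
  by apply: big1 => i _; rewrite Vt0 dotv0r mulr0.
have T7 : \sum_(i < N.-1) \sum_(j < i) beta i j / L * dotv (Vt t i.+2) (Vt t j.+1) = 0.
  apply: big1 => i _; apply: big1 => j _; case: (ltnP i k) => h.
    by rewrite IH ?ltn_ord // !mul0r.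
  by rewrite dot1 vt_big ?mul0r ?mulr0 //; lia.
have T35 : \sum_(1 <= i < N.-1) \sum_(j < i) beta i j / L * dotv (Vt t i.+1) (Vt t j.+1)
         + \sum_(j < N.-1) beta N.-1 j / L * dotv (Vt t N.-1.+1) (Vt t j.+1)
         = t / L * \sum_(j < k) beta k j ^+ 2.
  case: (eqVneq k N.-1) => [e|ne].
    rewrite -e Fk big_nat big1 ?add0r // => i /andP[_ h].
    by apply: big1 => j _; rewrite IH ?ltn_ord // !mul0r.
  rewrite (sum_nat_single (k := k)); last 2 first.
  - by apply/andP; split => //; lia.
  - move=> i /andP[_ h] ne'; case: (ltnP i k) => h'.
      by apply: big1 => j _; rewrite IH ?ltn_ord // !mul0r.
    by apply: big1 => j _; rewrite dot1 vt_big ?mul0r ?mulr0 //; lia.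
  rewrite Fk [X in _ + X]big1 ?addr0 // => j _.
  by rewrite dot1 vt_big ?mul0r ?mulr0 //; lia.
rewrite /Fml Q1 Q2 Q3 T2 T6 T7 Vt0 !dotv0r !mulr0 !addr0 !subr0 mulr0 add0r.
by rewrite -T35.
Qed.

Lemma beta_row_zero : psd (LMI N mu L tau lnext lstar llast beta) ->
  forall j, (j < k)%N -> beta k j = 0.
Proof.
move=> Hpsd j jk.
have HV : forall a, (N < a)%N -> Vt (-1) a = 0.
  by move=> a ha; apply/matrixP => r c; rewrite !mxE vt_big //; lia.
have := Fml_ge HV Hpsd; rewrite Fml_test.
have := sqnorm_ge0 (Pm N (Vt (-1)) *m wNv N mu L beta).
set S := \sum_(j < k) beta k j ^+ 2.
have S0 : 0 <= S by apply: sumr_ge0 => i _; apply: sqr_ge0.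
have h1 : 0 <= S / L by apply: divr_ge0 => //; apply: ltW.
have h2 : -1 / L * S = - (S / L) by rewrite mulrAC mulN1r mulNr.
rewrite h2 => Ha Hb.
have SL0 : S / L = 0 by lra.
move: SL0 => /eqP; rewrite mulf_eq0 invr_eq0 (gt_eqF HL) orbF => /eqP SS.
have := @psumr_eq0P _ _ _ (fun i : 'I_k => beta k i ^+ 2) (fun i _ => sqr_ge0 _) SS (Ordinal jk) isT.
by move=> /eqP; rewrite sqrf_eq0 => /eqP.
Qed.

End Test.

Section Parts.
Variable R : realType.
Variables (N : nat) (mu L tau : R) (lnext lstar : nat -> R) (llast : R)
          (beta : nat -> nat -> R).
Hypothesis HN : (1 < N)%N.
Hypothesis HL : 0 < L.
Hypothesis Hfeas : feasible N mu L tau lnext lstar llast beta.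

Let Hnx0 : forall i, (i.+2 <= N)%N -> 0 <= lnext i.
Proof. by case: Hfeas. Qed.
Let Hst0 : forall i, (i < N)%N -> 0 <= lstar i.
Proof. by case: Hfeas => _ []. Qed.
Let Hll0 : 0 <= llast.
Proof. by case: Hfeas => _ [] _ []. Qed.
Let Hpsd : psd (LMI N mu L tau lnext lstar llast beta).
Proof. by case: Hfeas => _ [] _ [] _ []. Qed.
Let Hlc : lin_constraint N lnext lstar llast = 0.
Proof. by case: Hfeas => _ [] _ [] _ []. Qed.

Lemma lam_step m : (m.+1 < N)%N -> lnext m = 0 ->
  lstar m = 0 /\ (forall m', m = m'.+1 -> lnext m' = 0).
Proof.
move=> hm h0; have := lc_mid HN Hlc hm; rewrite h0.
have hs := Hst0 (ltnW hm).
case: m hm h0 hs => [|m'] hm h0 hs.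
  by rewrite add0r => <-; split => // m' .
have hn := Hnx0 (ltnW hm).
move=> H; split; first by lra.
by move=> m'' [<-]; lra.
Qed.

Lemma lam_zero i : (i.+1 < N)%N -> lnext i = 0 ->
  forall m, (m <= i)%N -> lnext m = 0 /\ lstar m = 0.
Proof.
move=> hi h0.
have H : forall n, (n <= i)%N -> lnext (i - n) = 0.
  elim=> [|n IHn] hn; first by rewrite subn0.
  have := IHn (ltnW hn).
  have -> : (i - n = (i - n.+1).+1)%N by lia.
  move=> h; apply: (proj2 (lam_step _ h)) => //; lia.
move=> m hm.
have e : lnext m = 0 by have := H (i - m)%N (leq_subr _ _); rewrite subKn.
split=> //; apply: (proj1 (lam_step _ e)); lia.
Qed.

Lemma part_i : forall i : nat, (i < N.-1)%N -> lnext i = 0 ->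
     forall j : nat, (j < i)%N -> beta i j = 0.
Proof.
move=> i hi h0.
have hz := lam_zero (i := i) ltac:(lia) h0.
suff H : forall k, (k <= i)%N -> forall j, (j < k)%N -> beta k j = 0.
  by apply: H.
elim/ltn_ind => k IH hk j jk.
case: (posnP k) => [k0|kpos]; first by rewrite k0 in jk.
apply: (beta_row_zero (N := N) (mu := mu) (L := L) (tau := tau) (lnext := lnext) (lstar := lstar) (llast := llast) (k := k)) => //.
- by lia.
- by move=> m mk; apply: IH => //; lia.
- by move=> m mk _; apply: (proj2 (hz m _)); lia.
- by move=> m mk _; apply: (proj1 (hz m _)); lia.
- by move=> e; lia.
Qed.

Lemma part_ii : llast = 0 -> forall j : nat, (j < N.-1)%N -> beta N.-1 j = 0.
Proof.
move=> hl.
have := lc_last HN Hlc; rewrite hl.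
have h1 := Hnx0 (i := N.-2) ltac:(lia).
have h2 := Hst0 (i := N.-1) ltac:(lia).
move=> H.
have e1 : lnext N.-2 = 0 by lra.
have e2 : lstar N.-1 = 0 by lra.
have hz := lam_zero (i := N.-2) ltac:(lia) e1.
apply: (beta_row_zero (N := N) (mu := mu) (L := L) (tau := tau) (lnext := lnext) (lstar := lstar) (llast := llast) (k := N.-1)) => //.
- by lia.
- by move=> m mk; apply: part_i => //; apply: (proj1 (hz m _)); lia.
- move=> m mk _; case: (ltnP m N.-1) => h; first by apply: (proj2 (hz m _)); lia.
  by have -> : m = N.-1 by lia.
- by move=> m mk hm; apply: (proj1 (hz m _)); lia.
Qed.

End Parts.

Section Fun.
Variable R : realType.
Variables (mu L : R).
Hypothesis Hmu : 0 <= mu.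
Hypothesis HmuL : mu < L.
Variable d : nat.
Variables (f : 'cV[R]_d -> R) (grad : 'cV[R]_d -> 'cV[R]_d) (ws : 'cV[R]_d).
Hypothesis HF : in_FmuL mu L f grad.
Hypothesis Hmin : is_argmin f ws.

Definition ft x := f x - mu / 2 * sqnorm (x - ws).
Definition gt x := grad x - mu *: (x - ws).

Lemma sq_split (a b : 'cV[R]_d) :
  sqnorm (a + b) = sqnorm a + 2 * dotv a b + sqnorm b.
Proof. rewrite /sqnorm !dotvDl !dotvDr (dotvC b a); ring. Qed.

Lemma grad_ws : grad ws = 0.
Proof.
case: HF => _ [_ [Hup _]].
have L0 : 0 < L by apply: le_lt_trans HmuL.
set u := grad ws.
have := Hup (ws - L^-1 *: u) ws; have := Hmin (ws - L^-1 *: u).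
have E0 : ws - L^-1 *: u - ws = - (L^-1 *: u) by rewrite addrAC subrr add0r.
rewrite E0 /sqnorm dotvNr dotvNl !dotvZr !dotvZl dotvNr dotvZr !mulrN opprK -/u.
set s := dotv u u => H1 H2.
have Hs : 0 <= s by apply: sqnorm_ge0.
have E : L / 2 * (L^-1 * (L^-1 * s)) = L^-1 * s / 2 by field; rewrite gt_eqF.
rewrite E in H2.
have : L^-1 * s <= 0 by lra.
rewrite pmulr_rle0 ?invr_gt0 // => hs.
have s0 : s = 0 by apply/eqP; rewrite eq_le hs Hs.
by move: s0; rewrite /s dotvE => /psumr_eq0P H; apply/matrixP => i j; rewrite (ord1 j) mxE;
  apply/eqP; rewrite -sqrf_eq0 expr2; apply/eqP; apply: H => // k _; rewrite -expr2 sqr_ge0.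
Qed.

Lemma gt_ws : gt ws = 0.
Proof. by rewrite /gt grad_ws subrr scaler0 subr0. Qed.

Lemma ft_up x y : ft x <= ft y + dotv (gt y) (x - y) + (L - mu) / 2 * sqnorm (x - y).
Proof.
case: HF => _ [_ [Hup _]].
have := Hup x y.
have E : x - ws = (y - ws) + (x - y) by rewrite [RHS]addrC addrA subrK.
rewrite /ft /gt E (sq_split (y - ws)) (dotvBl (grad y)) dotvZl.
set A := sqnorm (y - ws); set B := dotv (y - ws) (x - y); set C := sqnorm (x - y).
set D := dotv (grad y) (x - y).
move=> H.
have : mu / 2 * (A + 2 * B + C) = mu / 2 * A + mu * B + mu / 2 * C by field.
have : (L - mu) / 2 * C = L / 2 * C - mu / 2 * C by field.
lra.
Qed.

Lemma ft_lo x y : ft y + dotv (gt y) (x - y) <= ft x.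
Proof.
case: HF => _ [_ [_ Hlo]].
have := Hlo x y.
have E : x - ws = (y - ws) + (x - y) by rewrite [RHS]addrC addrA subrK.
rewrite /ft /gt E (sq_split (y - ws)) (dotvBl (grad y)) dotvZl.
set A := sqnorm (y - ws); set B := dotv (y - ws) (x - y); set C := sqnorm (x - y).
set D := dotv (grad y) (x - y).
move=> H.
have : mu / 2 * (A + 2 * B + C) = mu / 2 * A + mu * B + mu / 2 * C by field.
lra.
Qed.

Lemma CC x y : ft y + dotv (gt y) (x - y) + sqnorm (gt x - gt y) / (2 * (L - mu)) <= ft x.
Proof.
apply: cocoer; first by rewrite subr_gt0.
- exact: ft_up.
- exact: ft_lo.
Qed.

End Fun.

Lemma sqnormN (R : realType) d (a : 'cV[R]_d) : sqnorm (- a) = sqnorm a.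
Proof. by rewrite /sqnorm dotvNl dotvNr opprK. Qed.

Section Ineq.
Variable R : realType.
Variables (N : nat) (mu L : R).
Hypothesis Hmu : 0 <= mu.
Hypothesis HmuL : mu < L.
Variable d : nat.
Variables (f : 'cV[R]_d -> R) (grad : 'cV[R]_d -> 'cV[R]_d) (ws : 'cV[R]_d)
  (w : nat -> 'cV[R]_d).
Hypothesis HF : in_FmuL mu L f grad.
Hypothesis Hmin : is_argmin f ws.

Definition Vf (a : nat) : 'cV[R]_d :=
  if a is a'.+1 then (if (a' < N)%N then gt mu grad ws (w a') else 0) else w 0%N - ws.

Local Notation G i := (Vf i.+1).
Local Notation xx i := (w i - ws).
Local Notation ftt := (ft mu f ws).

Definition hh i := ftt (w i) - ftt ws - dotv (G i) (xx i).

Lemma VfG i : (i < N)%N -> G i = gt mu grad ws (w i).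
Proof. by move=> h; rewrite /= h. Qed.

Lemma VfN k : (N < k)%N -> Vf k = 0.
Proof. by case: k => [//|k] h /=; have -> : (k < N)%N = false by lia. Qed.

Lemma A_star i : (i < N)%N -> hh i + sqnorm (G i) / (2 * (L - mu)) <= 0.
Proof.
move=> hi; have := CC HmuL ws HF ws (w i).
rewrite (gt_ws Hmu HmuL HF Hmin) sub0r sqnormN -(opprB (w i)) dotvNr /hh VfG //.
lra.
Qed.

Lemma A_mid i : (i.+1 < N)%N ->
  hh i.+1 - hh i + dotv (G i.+1 - G i) (xx i) + sqnorm (G i - G i.+1) / (2 * (L - mu)) <= 0.
Proof.
move=> hi; have := CC HmuL ws HF (w i) (w i.+1).
have E : dotv (gt mu grad ws (w i.+1)) (w i - w i.+1)
   = dotv (gt mu grad ws (w i.+1)) (xx i) - dotv (gt mu grad ws (w i.+1)) (xx i.+1).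
  by rewrite -dotvBr opprB addrA subrK.
rewrite E /hh dotvBl !VfG //; last by lia.
lra.
Qed.

Lemma A_last : (0 < N)%N ->
  - hh N.-1 - dotv (G N.-1) (xx N.-1) + sqnorm (G N.-1) / (2 * (L - mu)) <= 0.
Proof.
move=> hN; have := CC HmuL ws HF (w N.-1) ws.
rewrite (gt_ws Hmu HmuL HF Hmin) dotv0l subr0 /hh VfG; last by lia.
lra.
Qed.

End Ineq.

Section Main.
Variable R : realType.
Variables (N : nat) (mu L tau : R) (lnext lstar : nat -> R) (llast : R)
          (beta : nat -> nat -> R).
Hypothesis HN : (1 < N)%N.
Hypothesis Hmu : 0 <= mu.
Hypothesis HmuL : mu < L.
Hypothesis Hfeas : feasible N mu L tau lnext lstar llast beta.
Variable d : nat.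
Variables (f : 'cV[R]_d -> R) (grad : 'cV[R]_d -> 'cV[R]_d) (ws : 'cV[R]_d)
  (w : nat -> 'cV[R]_d).
Hypothesis HF : in_FmuL mu L f grad.
Hypothesis Hmin : is_argmin f ws.
Local Notation alp := (alpha N lnext llast beta).
Hypothesis Hw : forall k : nat, (1 <= k <= N)%N ->
        w k - ws =
          (1 - mu / L * \sum_(i < k) alp k i) *: (w 0%N - ws)
          - \sum_(i < k) (alp k i / L) *:
              (grad (w i) - mu *: (w i - ws)).

Let HL : 0 < L. Proof. exact: le_lt_trans HmuL. Qed.
Let Hlc : lin_constraint N lnext lstar llast = 0.
Proof. by case: Hfeas => _ [] _ [] _ []. Qed.

Local Notation V := (Vf N mu grad ws w).
Local Notation G i := (V i.+1).
Local Notation xx i := (w i - ws).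
Local Notation X0 := (V 0).

Lemma ba_mid i j : (1 <= i)%N -> (i < N.-1)%N -> (j < i)%N -> beta i j = lnext i * alp i j.
Proof.
move=> h1 h2 h3; rewrite /alpha.
case: eqP => [->|nz]; first by rewrite mulr0.
have -> : (i == N) = false by apply/eqP; lia.
have -> : (i == N.-1) = false by apply/eqP; lia.
have nz' : lnext i != 0.
  by apply/eqP => e; apply: nz; apply: (part_i HN HL Hfeas h2 e h3).
by rewrite mulrC divfK.
Qed.

Lemma ba_last j : (j < N.-1)%N -> beta N.-1 j = llast * alp N.-1 j.
Proof.
move=> h3; rewrite /alpha.
case: eqP => [->|nz]; first by rewrite mulr0.
have -> : (N.-1 == N) = false by apply/eqP; lia.
rewrite eqxx.
have nz' : llast != 0.
  by apply/eqP => e; apply: nz; apply: (part_ii HN HL Hfeas e h3).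
by rewrite mulrC divfK.
Qed.

Lemma ba_N j : alp N j = beta N j.
Proof. by rewrite /alpha eqxx; case: eqP. Qed.

Lemma x_rep i (lam : R) : (1 <= i <= N)%N ->
  (forall j, (j < i)%N -> beta i j = lam * alp i j) ->
  lam *: xx i = (lam - mu / L * \sum_(j < i) beta i j) *: X0
                - \sum_(j < i) (beta i j / L) *: G j.
Proof.
move=> hi Hb; rewrite Hw // scalerBr scalerA scaler_sumr.
congr (_ *: _ - _).
  rewrite mulrBr mulr1 mulrCA mulr_sumr; congr (_ - _ * _).
  by apply: eq_bigr => j _; rewrite Hb.
apply: eq_bigr => j _; have hj := ltn_ord j; rewrite scalerA VfG; last by lia.
by rewrite Hb // mulrA.
Qed.

Local Notation H i := (hh N mu f grad ws w i).

Lemma a3 : \sum_(i < N) lstar i * H i + \sum_(i < N.-1) lnext i * (H i.+1 - H i)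
           - llast * H N.-1 = 0.
Proof.
set hv : 'cV[R]_N := \col_(m < N) H m.
have fvd i : (i < N)%N -> dotv (fv R N i) hv = H i.
  move=> hi; rewrite dotvE.
  under eq_bigr do rewrite !mxE mulrC.
  by rewrite delta_sum hi.
have := congr1 (fun v => dotv v hv) Hlc.
rewrite /= dotv0l /lin_constraint dotvBl dotvDl !dotv_suml dotvZl fvd; last by lia.
have E1 : \sum_(i < N.-1) dotv (lnext i *: (fv R N i.+1 - fv R N i)) hv
          = \sum_(i < N.-1) lnext i * (H i.+1 - H i).
  apply: eq_bigr => i _; have hi := ltn_ord i.
  by rewrite dotvZl dotvBl !fvd //; lia.
have E2 : \sum_(i < N) dotv (lstar i *: fv R N i) hv = \sum_(i < N) lstar i * H i.
  by apply: eq_bigr => i _; rewrite dotvZl fvd.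
rewrite E1 E2 => Hz.
lra.
Qed.

Local Notation cc i := (lnext i - mu / L * \sum_(j < i) beta i j).
Local Notation cl := (llast - mu / L * \sum_(j < N.-1) beta N.-1 j).

Lemma Ki i : (1 <= i)%N -> (i < N.-1)%N ->
  lnext i * dotv (G i.+1 - G i) (xx i) =
  cc i * dotv (G i.+1) X0 - cc i * dotv (G i) X0
  - \sum_(j < i) beta i j / L * dotv (G i.+1) (G j)
  + \sum_(j < i) beta i j / L * dotv (G i) (G j).
Proof.
move=> h1 h2.
rewrite -dotvZr (x_rep (lam := lnext i)); last 2 first.
- by apply/andP; split; lia.
- by move=> j hj; apply: ba_mid.
rewrite dotvBr dotvZr dotv_sumr dotvBl.
have E : \sum_(j < i) dotv (G i.+1 - G i) ((beta i j / L) *: G j)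
   = \sum_(j < i) beta i j / L * dotv (G i.+1) (G j)
     - \sum_(j < i) beta i j / L * dotv (G i) (G j).
  by rewrite -sumrB; apply: eq_bigr => j _; rewrite dotvZr dotvBl mulrBr.
rewrite E.
set a := dotv _ _; set b := dotv _ _.
set S1 := \sum_(j < i) _; set S2 := \sum_(j < i) _.
set c := cc i.
lra.
Qed.

Lemma KL : llast * dotv (G N.-1) (xx N.-1) =
  cl * dotv (G N.-1) X0 - \sum_(j < N.-1) beta N.-1 j / L * dotv (G N.-1) (G j).
Proof.
rewrite -dotvZr (x_rep (lam := llast)); last 2 first.
- by apply/andP; split; lia.
- by move=> j hj; apply: ba_last.
rewrite dotvBr dotvZr dotv_sumr; congr (_ - _).
by apply: eq_bigr => j _; rewrite dotvZr.
Qed.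

Lemma a4 :
   - lstar 0 * dotv (G 0) X0
   - \sum_(1 <= i < N.-1) cc i * dotv (G i) X0
   + \sum_(1 <= i < N.-1) \sum_(j < i) (beta i j / L) * dotv (G i) (G j)
   - cl * dotv (G N.-1) X0
   + \sum_(j < N.-1) (beta N.-1 j / L) * dotv (G N.-1) (G j)
   + \sum_(i < N.-1) cc i * dotv (G i.+1) X0
   - \sum_(i < N.-1) \sum_(j < i) (beta i j / L) * dotv (G i.+1) (G j)
   = \sum_(i < N.-1) lnext i * dotv (G i.+1 - G i) (xx i)
     - llast * dotv (G N.-1) (xx N.-1).
Proof.
have s0 : (0 < N.-1)%N by lia.
have E6 : \sum_(i < N.-1) cc i * dotv (G i.+1) X0
   = lnext 0 * dotv (G 0.+1) X0 + \sum_(1 <= i < N.-1) cc i * dotv (G i.+1) X0.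
  rewrite -(big_mkord xpredT (fun i => cc i * dotv (G i.+1) X0)).
  by rewrite (big_ltn s0) big_ord0 mulr0 subr0.
have E7 : \sum_(i < N.-1) \sum_(j < i) (beta i j / L) * dotv (G i.+1) (G j)
   = \sum_(1 <= i < N.-1) \sum_(j < i) (beta i j / L) * dotv (G i.+1) (G j).
  rewrite -(big_mkord xpredT (fun i => \sum_(j < i) (beta i j / L) * dotv (G i.+1) (G j))).
  by rewrite (big_ltn s0) big_ord0 add0r.
have EI : \sum_(i < N.-1) lnext i * dotv (G i.+1 - G i) (xx i)
   = lnext 0 * dotv (G 0.+1 - G 0) (xx 0) + \sum_(1 <= i < N.-1) lnext i * dotv (G i.+1 - G i) (xx i).
  by rewrite -(big_mkord xpredT (fun i => lnext i * dotv (G i.+1 - G i) (xx i))) (big_ltn s0).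
have EK : \sum_(1 <= i < N.-1) lnext i * dotv (G i.+1 - G i) (xx i)
   = \sum_(1 <= i < N.-1) cc i * dotv (G i.+1) X0
     - \sum_(1 <= i < N.-1) cc i * dotv (G i) X0
     - \sum_(1 <= i < N.-1) \sum_(j < i) beta i j / L * dotv (G i.+1) (G j)
     + \sum_(1 <= i < N.-1) \sum_(j < i) beta i j / L * dotv (G i) (G j).
  under eq_big_nat => i /andP[h1 h2] do rewrite Ki //.
  by rewrite big_split sumrB sumrB.
have K0 : lnext 0 * dotv (G 0.+1 - G 0) (xx 0)
   = lnext 0 * dotv (G 0.+1) X0 - lstar 0 * dotv (G 0) X0.
  have e : lnext 0 = lstar 0 by rewrite (lc_mid HN Hlc (m := 0)) ?add0r //.
  by rewrite -[xx 0]/X0 dotvBl mulrBr e.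
rewrite E6 E7 EI EK K0 KL.
lra.
Qed.

Local Notation L' := (2 * (L - mu)).

Lemma Fml_eq : Fml N mu L tau lnext lstar llast beta V =
  tau * dotv X0 X0
  + \sum_(i < N) lstar i * (H i + dotv (G i) (G i) / L')
  + \sum_(i < N.-1) lnext i * (H i.+1 - H i + dotv (G i.+1 - G i) (xx i)
                               + dotv (G i - G i.+1) (G i - G i.+1) / L')
  + llast * (- H N.-1 - dotv (G N.-1) (xx N.-1) + dotv (G N.-1) (G N.-1) / L').
Proof.
have nz : L' != 0 by rewrite mulf_neq0 // subr_eq0 gt_eqF.
have e1 : \sum_(i < N) lstar i * (H i + dotv (G i) (G i) / L')
   = \sum_(i < N) lstar i * H i + L'^-1 * \sum_(i < N) lstar i * dotv (G i) (G i).
  rewrite mulr_sumr -big_split; apply: eq_bigr => i _.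
  by rewrite mulrDr; congr (_ + _); rewrite mulrA mulrC.
have e2 : \sum_(i < N.-1) lnext i * (H i.+1 - H i + dotv (G i.+1 - G i) (xx i)
                               + dotv (G i - G i.+1) (G i - G i.+1) / L')
   = \sum_(i < N.-1) lnext i * (H i.+1 - H i)
     + \sum_(i < N.-1) lnext i * dotv (G i.+1 - G i) (xx i)
     + L'^-1 * \sum_(i < N.-1) lnext i * dotv (G i - G i.+1) (G i - G i.+1).
  rewrite mulr_sumr -!big_split; apply: eq_bigr => i _.
  by rewrite !mulrDr; congr (_ + _); rewrite mulrA mulrC.
rewrite e1 e2 /Fml.
have := a3; have := a4.
set T := L'^-1.
lra.
Qed.

Lemma part_iii : sqnorm (w N - ws) <= tau * sqnorm (w 0%N - ws).
Proof.
have Hpsd : psd (LMI N mu L tau lnext lstar llast beta).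
  by case: Hfeas => _ [] _ [] _ [].
have Hnx0 : forall i, (i.+2 <= N)%N -> 0 <= lnext i by case: Hfeas.
have Hst0 : forall i, (i < N)%N -> 0 <= lstar i by case: Hfeas => _ [].
have Hll0 : 0 <= llast by case: Hfeas => _ [] _ [].
have HV : forall k, (N < k)%N -> V k = 0 by move=> k; apply: (VfN Hmu HmuL).
have := Fml_ge HV Hpsd.
have -> : Pm N V *m wNv N mu L beta = w N - ws.
  rewrite (Phi_wN _ _ _ HV) Hw; last by apply/andP; split; lia.
  congr (_ *: _ - _).
    by congr (1 - _ * _); apply: eq_bigr => i _; rewrite ba_N.
  apply: eq_bigr => i _; rewrite ba_N VfG //.
rewrite Fml_eq.
have S1 : \sum_(i < N) lstar i * (H i + dotv (G i) (G i) / L') <= 0.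
  apply: sumr_le0 => i _; apply: mulr_ge0_le0; first exact: Hst0.
  exact: (A_star Hmu HmuL w HF Hmin).
have S2 : \sum_(i < N.-1) lnext i * (H i.+1 - H i + dotv (G i.+1 - G i) (xx i)
                               + dotv (G i - G i.+1) (G i - G i.+1) / L') <= 0.
  apply: sumr_le0 => i _; have hi := ltn_ord i.
  apply: mulr_ge0_le0; first by apply: Hnx0; lia.
  by apply: (A_mid Hmu HmuL ws w HF); lia.
have S3 : llast * (- H N.-1 - dotv (G N.-1) (xx N.-1) + dotv (G N.-1) (G N.-1) / L') <= 0.
  apply: mulr_ge0_le0 => //; apply: (A_last Hmu HmuL w HF Hmin); lia.
rewrite /sqnorm -[w 0%N - ws]/X0.
lra.
Qed.

End Main.

Unset Implicit Arguments.

Theorem lemma6 (R : realType) (N : nat) (mu L tau : R)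
    (lnext lstar : nat -> R) (llast : R) (beta : nat -> nat -> R) :
  (1 < N)%N -> 0 <= mu -> mu < L ->
  optimal N mu L tau lnext lstar llast beta ->
  (* (i) *)
  (forall i : nat, (i < N.-1)%N -> lnext i = 0 ->
     forall j : nat, (j < i)%N -> beta i j = 0) /\
  (* (ii) *)
  (llast = 0 -> forall j : nat, (j < N.-1)%N -> beta N.-1 j = 0) /\
  (* (iii) *)
  (forall (d : nat) (f : 'cV[R]_d -> R) (grad : 'cV[R]_d -> 'cV[R]_d)
          (ws : 'cV[R]_d) (w : nat -> 'cV[R]_d),
     in_FmuL mu L f grad ->
     is_argmin f ws ->
     (forall k : nat, (1 <= k <= N)%N ->
        w k - ws =
          (1 - mu / L * \sum_(i < k) alpha N lnext llast beta k i) *: (w 0%N - ws)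
          - \sum_(i < k) (alpha N lnext llast beta k i / L) *:
              (grad (w i) - mu *: (w i - ws))) ->
     sqnorm (w N - ws) <= tau * sqnorm (w 0%N - ws)).
Proof.
move=> HN Hmu HmuL [Hfeas _].
have HL : 0 < L by apply: le_lt_trans HmuL.
split; first exact: (part_i HN HL Hfeas).
split; first exact: (part_ii HN HL Hfeas).
move=> d f grad ws w HF Hmin Hw.
exact: (part_iii HN Hmu HmuL Hfeas HF Hmin Hw).
Qed.
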